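(* Let $\mathcal{A}$ be a visibly pushdown automaton with $m$ states over the pushdown alphabet $\Sigma$. Then the $\Sigma$-diameter of $\mathcal{A}$ is at most $2^{m^2}$; that is, for all states $p,q$ such that there exists a balanced word $u\in\Sigma^*$ with $p\xrightarrow{u}q$, there exists such a balanced word of length at most $2^{m^2}$.
   Context: Pushdown alphabet $\Sigma=\Sigma_+\cup\Sigma_-\cup\Sigma_=$ (push, pop, neutral symbols); a VPA pushes one stack symbol on each push symbol, pops one on each pop symbol, and does not touch the stack on neutral symbols. A word is balanced if #push − #pop $=0$ and every prefix has #push − #pop $\geq 0$. For balanced $u$, $p\xrightarrow{u}q$ means $(\sigma,p)\xrightarrow{u}(\sigma,q)$ for some (equivalently any) stack content $\sigma$. *)

(* Defs.v *)
From mathcomp Require Import all_boot.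
Set Implicit Arguments. Unset Strict Implicit. Unset Printing Implicit Defensive.

Inductive symkind := Push | Pop | Neutral.

Definition symkind_eqb (x y : symkind) : bool :=
  match x, y with
  | Push, Push | Pop, Pop | Neutral, Neutral => true
  | _, _ => false end.

Record pdalphabet := PDAlphabet {
  letter : finType;
  kind : letter -> symkind
}.

Definition is_push (S : pdalphabet) (a : letter S) : bool := symkind_eqb (kind a) Push.
Definition is_pop (S : pdalphabet) (a : letter S) : bool := symkind_eqb (kind a) Pop.

Definition balanced (S : pdalphabet) (u : seq (letter S)) : bool :=
  (count (@is_push S) u == count (@is_pop S) u) &&
  [forall i : 'I_(size u).+1,
     count (@is_pop S) (take i u) <= count (@is_push S) (take i u)].

(* A (nondeterministic) visibly pushdown automaton over S with finite state set
   Q and finite stack alphabet G.  Initial/final states play no role here. *)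
Record vpa (S : pdalphabet) := VPA {
  state : finType;
  stacksym : finType;
  dpush : state -> letter S -> state -> stacksym -> bool;
  dpop : state -> letter S -> stacksym -> state -> bool;
  dneutral : state -> letter S -> state -> bool
}.

(* One step between configurations (stack, state); stack top is the head. *)
Definition vstep (S : pdalphabet) (A : vpa S)
    (c : seq (stacksym A) * state A) (a : letter S)
    (c' : seq (stacksym A) * state A) : Prop :=
  match kind a with
  | Push => exists g, c'.1 = g :: c.1 /\ dpush c.2 a c'.2 g
  | Pop => exists g, c.1 = g :: c'.1 /\ dpop c.2 a g c'.2
  | Neutral => c'.1 = c.1 /\ dneutral c.2 a c'.2
  end.

Fixpoint vrun (S : pdalphabet) (A : vpa S)
    (c : seq (stacksym A) * state A) (u : seq (letter S))
    (c' : seq (stacksym A) * state A) : Prop :=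
  match u with
  | [::] => c' = c
  | a :: u' => exists d, @vstep S A c a d /\ @vrun S A d u' c'
  end.

Definition summary (S : pdalphabet) (A : vpa S) (p : state A)
    (u : seq (letter S)) (q : state A) : Prop :=
  exists sigma : seq (stacksym A), @vrun S A (sigma, p) u (sigma, q).

(* Main.v *)
Require Import Defs.
From mathcomp Require Import all_boot zify.
Set Implicit Arguments. Unset Strict Implicit. Unset Printing Implicit Defensive.

Lemma balancedP (S : pdalphabet) (u : seq (letter S)) :
  balanced u <-> (count (@is_push S) u = count (@is_pop S) u /\
     forall i, count (@is_pop S) (take i u) <= count (@is_push S) (take i u)).
Proof.
rewrite /balanced; split.
  move=> /andP[/eqP He /forallP H]; split=> // i.
  case: (leqP i (size u)) => hi.
    have hi' : i < (size u).+1 by [].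
    exact: (H (Ordinal hi')).
  by rewrite take_oversize ?He // ltnW.
move=> [He H]; apply/andP; split; first by rewrite He.
by apply/forallP => i; apply: H.
Qed.

Lemma vrun_cat (S : pdalphabet) (A : vpa S) u v c c' :
  vrun (A:=A) c (u ++ v) c' <-> exists d, vrun (A:=A) c u d /\ vrun (A:=A) d v c'.
Proof.
elim: u c => [|a u IH] c /=.
  split; [by exists c | by move=> [d [-> H]]].
split.
  move=> [d [Hs /IH [e [H1 H2]]]]; exists e; split=> //; by exists d.
move=> [e [[d [Hs H1]] H2]]; exists d; split=> //; apply/IH; by exists e.
Qed.

Lemma balanced_cat (S : pdalphabet) (u v : seq (letter S)) :
  balanced u -> balanced v -> balanced (u ++ v).
Proof.
move=> /balancedP [Hu Hu'] /balancedP [Hv Hv']; apply/balancedP; split.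
  by rewrite !count_cat Hu Hv.
move=> i; rewrite take_cat; case: ltnP => _; first exact: Hu'.
rewrite !count_cat Hu; have := Hv' (i - size u); lia.
Qed.

Lemma balanced_nil (S : pdalphabet) : balanced (S:=S) [::].
Proof. by apply/balancedP; split => // i. Qed.

Lemma kindE (S : pdalphabet) (a : letter S) :
  is_push a = (symkind_eqb (kind a) Push) /\ is_pop a = (symkind_eqb (kind a) Pop).
Proof. by []. Qed.

Lemma balanced_neutral (S : pdalphabet) (a : letter S) :
  kind a = Neutral -> balanced [:: a].
Proof.
move=> Ha; have [h1 h2] := kindE a; rewrite Ha /= in h1 h2.
apply/balancedP; rewrite /= h1 h2; split=> // [[|i]] //=.
by rewrite h1 h2.
Qed.

Lemma balanced_pp (S : pdalphabet) (a b : letter S) v :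
  kind a = Push -> kind b = Pop -> balanced v -> balanced (a :: v ++ [:: b]).
Proof.
move=> Ha Hb /balancedP [Hv Hv'].
have [h1 h2] := kindE a; rewrite Ha /= in h1 h2.
have [h3 h4] := kindE b; rewrite Hb /= in h3 h4.
apply/balancedP; split.
  by rewrite /= !count_cat /= h1 h2 h3 h4; lia.
case=> [|i] //=; rewrite take_cat; case: ltnP => _.
  rewrite h1 h2; have := Hv' i; lia.
rewrite !count_cat h1 h2.
case: (i - size v) => [|j] /=; rewrite ?h3 ?h4 /=; lia.
Qed.

Definition Fs (S : pdalphabet) (A : vpa S) (T : {set state A * state A}) :
  {set state A * state A} :=
  [set x | [|| x.1 == x.2,
    [exists a, symkind_eqb (kind a) Neutral && dneutral x.1 a x.2],
    [exists r, ((x.1, r) \in T) && ((r, x.2) \in T)] |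
    [exists a, exists b, exists g, exists p', exists q',
       [&& symkind_eqb (kind a) Push, symkind_eqb (kind b) Pop,
           dpush x.1 a p' g, (p', q') \in T & dpop q' b g x.2]]]].

Lemma Fs_mono (S : pdalphabet) (A : vpa S) : {homo Fs (A:=A) : X Y / X \subset Y}.
Proof.
move=> X Y /subsetP sXY; apply/subsetP => x; rewrite !inE.
case/or4P => [->|->|/existsP[r /andP[h1 h2]]|/existsP[a /existsP[b /existsP[g /existsP[p' /existsP[q' /and5P[h1 h2 h3 h4 h5]]]]]]];
  rewrite ?orbT //.
  by apply/or4P; apply: Or43; apply/existsP; exists r; rewrite !sXY.
apply/or4P; apply: Or44; apply/existsP; exists a; apply/existsP; exists b;
apply/existsP; exists g; apply/existsP; exists p'; apply/existsP; exists q'.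
by rewrite h1 h2 h3 sXY.
Qed.

Definition wit (S : pdalphabet) (A : vpa S) (u : seq (letter S)) (p q : state A) :=
  balanced u /\ forall sigma, vrun (A:=A) (sigma, p) u (sigma, q).

Lemma symk (k k' : symkind) : symkind_eqb k k' -> k = k'.
Proof. by case: k; case: k'. Qed.

Lemma wit_iter (S : pdalphabet) (A : vpa S) k x :
  x \in iter k (Fs (A:=A)) set0 -> exists u, wit u x.1 x.2 /\ size u <= 2 ^ k.
Proof.
elim: k x => [|k IH] [p q] /=; first by rewrite inE.
rewrite inE /=.
case/or4P => [/eqP->|/existsP[a /andP[/symk h1 h2]]|/existsP[r /andP[h1 h2]]|/existsP[a /existsP[b /existsP[g /existsP[p' /existsP[q' /and5P[/symk h1 /symk h2 h3 h4 h5]]]]]]].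
- exists [::]; split; last by []. split; [exact: balanced_nil| by []].
- have k2 : 0 < 2 ^ k by rewrite expn_gt0.
  exists [:: a]; split; last by rewrite /= expnS; lia.
  split; first exact: balanced_neutral.
  move=> sigma /=; exists (sigma, q); split=> //; rewrite /vstep h1 /=; by split.
- have [u [[bu ru] su]] := IH _ h1; have [v [[bv rv] sv]] := IH _ h2.
  exists (u ++ v); split; last by rewrite size_cat expnS; lia.
  split; first exact: balanced_cat.
  move=> sigma; apply/vrun_cat; exists (sigma, r); split; [exact: ru|exact: rv].
- have [v [[bv rv] sv]] := IH _ h4.
  exists (a :: v ++ [:: b]); split.
    split; first exact: balanced_pp.
    move=> sigma /=; exists (g :: sigma, p'); split.
      by rewrite /vstep h1; exists g.
    apply/vrun_cat; exists (g :: sigma, q'); split; first exact: rv.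
    exists (sigma, q); split=> //; rewrite /vstep h2; by exists g.
  rewrite /= size_cat /= expnS.
  case: k IH h4 sv => [|k] IH h4 sv; first by move: h4; rewrite inE.
  have k2 : 0 < 2 ^ k by rewrite expn_gt0.
  rewrite expnS in sv *; lia.
Qed.

Lemma balanced_take (S : pdalphabet) (u : seq (letter S)) j :
  balanced u -> count (@is_pop S) (take j u) = count (@is_push S) (take j u) ->
  balanced (take j u).
Proof.
move=> /balancedP [He H] Hj; apply/balancedP; split=> // i.
rewrite -take_min; exact: H.
Qed.

Lemma balanced_drop (S : pdalphabet) (u : seq (letter S)) j :
  balanced u -> count (@is_pop S) (take j u) = count (@is_push S) (take j u) ->
  balanced (drop j u).
Proof.
move=> /balancedP [He H] Hj; apply/balancedP; split.
  have E1 := congr1 (count (@is_push S)) (cat_take_drop j u).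
  have E2 := congr1 (count (@is_pop S)) (cat_take_drop j u).
  rewrite !count_cat in E1 E2; lia.
move=> i; have := H (j + i); rewrite takeD !count_cat; lia.
Qed.

Lemma main_dec (S : pdalphabet) (A : vpa S) n (u : seq (letter S)) s s' p q :
  size u < n -> balanced u -> vrun (A:=A) (s, p) u (s', q) ->
  s' = s /\ (p, q) \in fixset (Fs (A:=A)).
Proof.
have HX := fixsetK (Fs_mono (A:=A)); set X := fixset _ in HX *.
elim: n u s s' p q => [|n IH] u s s' p q //= Hsz Hb Hr.
case: u Hsz Hb Hr => [|a r] Hsz Hb Hr.
  by case: Hr => -> ->; split=> //; rewrite -HX inE eqxx.
have Hu : size (a :: r) > 0 by [].
move: (a :: r) Hsz Hb Hr Hu => u Hsz Hb Hr Hu; clear a r.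
case: (boolP [exists j : 'I_(size u), (0 < j) &&
   (count (@is_pop S) (take j u) == count (@is_push S) (take j u))]).
  case/existsP => [[j /= hj] /andP [hj0 /eqP hjc]].
  have := Hr; rewrite -(cat_take_drop j u) => /vrun_cat [[s1 r1] [H1 H2]].
  have st : size (take j u) < n.
    rewrite size_take hj. lia.
  have sd : size (drop j u) < n.
    rewrite size_drop; lia.
  have [e1 i1] := IH _ _ _ _ _ st (balanced_take Hb hjc) H1.
  subst s1.
  have [e2 i2] := IH _ _ _ _ _ sd (balanced_drop Hb hjc) H2.
  split=> //; rewrite -HX inE /=; apply/or4P; apply: Or43; apply/existsP.
  by exists r1; rewrite i1 i2.
move/existsPn => Hno.
have Hlt : forall i, 0 < i < size u ->
   count (@is_pop S) (take i u) < count (@is_push S) (take i u).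
  move=> i /andP [i0 iu]; have := Hno (Ordinal iu); rewrite /= i0 /=.
  move/balancedP: Hb => [_ Hb]; have := Hb i; lia.
case: u Hsz Hb Hr Hu Hno Hlt => [|a0 r0] // Hsz Hb Hr _ _ Hlt.
have [ha1 ha2] := kindE a0.
case/lastP: r0 Hsz Hb Hr Hlt => [|v b] Hsz Hb Hr Hlt.
  have [Hc _] := (balancedP _).1 Hb; move: Hc => /=.
  case Ka: (kind a0) ha1 ha2 => /= -> -> // _.
  case: Hr => [[d1 d2] [/=]]; rewrite /vstep Ka /= => [[-> Hn] [-> ->]].
  split=> //; rewrite -HX inE /=; apply/or4P; apply: Or42; apply/existsP.
  by exists a0; rewrite Ka.
rewrite -cats1 in Hsz Hb Hr Hlt.
have Ka : kind a0 = Push.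
  have := Hlt 1; rewrite /= size_cat /= addn1 => /(_ isT).
  case: (kind a0) (ha1) (ha2) => /= -> -> /=; rewrite ?take0 ?addn0 //.
rewrite Ka /= in ha1 ha2.
have [hb1 hb2] := kindE b.
have [Hc Hp] := (balancedP _).1 Hb.
have Hl := Hlt (size v).+1; rewrite /= size_cat /= take_size_cat // in Hl.
have Hl' := Hl ltac:(lia).
move: Hc Hl'; rewrite /= !count_cat /= ha1 ha2 => Hc Hl'.
have Kb : kind b = Pop.
  move: Hc Hl'; case: (kind b) (hb1) (hb2) => /= -> -> Hc Hl' //; exfalso; lia.
rewrite Kb /= in hb1 hb2; rewrite hb1 hb2 in Hc.
have Bv : balanced v.
  apply/balancedP; split; first lia.
  move=> i; case: (ltnP i (size v)) => hi.
    have := Hlt i.+1; rewrite /= size_cat /= takel_cat ?ha1 ?ha2; last by apply: ltnW.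
    move=> /(_ ltac:(lia)); lia.
  rewrite take_oversize //; lia.
case: Hr => [[d1 d2] [/=]]; rewrite /vstep Ka /= => [[g [Hd1 Hpush]]].
subst d1 => /vrun_cat [[e1 e2] [He Hf]].
have [Ee i1] := IH v _ _ _ _ ltac:(move: Hsz; rewrite /= size_cat /=; lia) Bv He.
subst e1.
case: Hf => [[f1 f2] [/=]]; rewrite /vstep Kb /= => [[g' [[Eg Es] Hpop]] [-> ->]].
subst g' f1; split=> //.
rewrite -HX inE /=; apply/or4P; apply: Or44; apply/existsP; exists a0; apply/existsP; exists b;
apply/existsP; exists g; apply/existsP; exists d2; apply/existsP; exists e2.
by rewrite Ka Kb Hpush i1 Hpop.
Qed.

Theorem fact3 (S : pdalphabet) (A : vpa S) (p q : state A) :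
  (exists u : seq (letter S), balanced u /\ summary p u q) ->
  exists u : seq (letter S),
    [/\ balanced u, summary p u q & size u <= 2 ^ (#|state A| ^ 2)].
Proof.
move=> [u [Hb [sigma Hr]]].
have [_ Hin] := main_dec (ltnSn (size u)) Hb Hr.
have [w [[bw rw] sw]] := wit_iter Hin.
exists w; split=> //; first by exists [::]; exact: rw.
by rewrite card_prod mulnn in sw.
Qed.
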